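(* Let $(N,v)$ be a TU game with $\Pi(v)\neq\emptyset$. Then $\{\Pi(v),\Gamma(v),\Upsilon(v),\Psi(v)\}$ is a partition of $\Omega(v)$: each of the four sets is a subset of $\Omega(v)$, and every element of $\Omega(v)$ belongs to exactly one of them.
   Context: A TU game is a pair $(N,v)$ with $N=\{1,\dots,n\}$ and $v:2^N\to\mathbb{R}$, $v(\emptyset)=0$. $\mathcal{P}(N)$ denotes the set of partitions of $N$. A core solution is a pair $(\mathbf{x},\rho)$ with $\mathbf{x}\in\mathbb{R}^n$, $\rho\in\mathcal{P}(N)$, such that $\sum_{i\in S}x_i\ge v(S)$ for all $S\subseteq N$ and $\sum_{i\in S}x_i=v(S)$ for all $S\in\rho$; $\Pi(v)$ is the set of core solutions. $K_v=\max_{\rho\in\mathcal{P}(N)}\sum_{S\in\rho}v(S)$. A feasible environment state is a pair $(\mathbf{a},\mathcal{C})$ with $\mathbf{a}\in\mathbb{R}^n$ and $\mathcal{C}$ a set of pairwise disjoint subsets of $N$ such that $a_i\ge v(\{i\})$ for all $i\in N$ and $\sum_{i\in S}a_i\le v(S)$ for all $S\in\mathcal{C}$; $\Omega(v)$ is the set of feasible environment states. Define $\Gamma(v)=\{(\mathbf{a},\mathcal{C})\in\Omega(v):\sum_{i\in N}a_i=K_v,\ \sum_{i\in S}a_i\ge v(S)\ \forall S\subseteq N,\ \mathcal{C}\notin\mathcal{P}(N)\}$, $\Upsilon(v)=\{(\mathbf{a},\mathcal{C})\in\Omega(v):\sum_{i\in N}a_i>K_v,\ \sum_{i\in S}a_i\ge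 v(S)\ \forall S\subseteq N\}$, $\Psi(v)=\{(\mathbf{a},\mathcal{C})\in\Omega(v):\exists S\subseteq N \text{ with } \sum_{i\in S}a_i<v(S)\}$. *)

(* Defs.v *)
From mathcomp Require Import all_boot all_order all_algebra.
Set Implicit Arguments. Unset Strict Implicit. Unset Printing Implicit Defensive.
Import Order.TTheory GRing.Theory Num.Theory.
Local Open Scope ring_scope.

(* A TU game on N = 'I_n : v : {set 'I_n} -> R, with v set0 = 0 assumed
   as a hypothesis of the theorem.  Payoff vectors are functions 'I_n -> R,
   x(S) := \sum_(i in S) x i. *)
Section Game.
Variables (R : realFieldType) (n : nat).
Implicit Types (v : {set 'I_n} -> R) (x : 'I_n -> R).

Definition coal_sum x (S : {set 'I_n}) : R := \sum_(i in S) x i.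

Definition is_partition (P : {set {set 'I_n}}) : bool := partition P [set: 'I_n].

Definition pw_disjoint (C : {set {set 'I_n}}) : Prop :=
  forall S T, S \in C -> T \in C -> S != T -> [disjoint S & T].

Definition in_core x v : Prop := forall S : {set 'I_n}, coal_sum x S >= v S.

Definition Pi v (x : 'I_n -> R) (rho : {set {set 'I_n}}) : Prop :=
  is_partition rho /\ in_core x v /\ (forall S, S \in rho -> coal_sum x S = v S).

Definition singleton_partition : {set {set 'I_n}} := [set [set i] | i : 'I_n].

Definition Kv v : R :=
  \big[Num.max / (\sum_(S in singleton_partition) v S)]_(P | is_partition P)
     \sum_(S in P) v S.

Definition Omega v (a : 'I_n -> R) (C : {set {set 'I_n}}) : Prop :=
  pw_disjoint C /\ (forall i, a i >= v [set i]) /\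
  (forall S, S \in C -> coal_sum a S <= v S).

Definition Gamma v a C : Prop :=
  Omega v a C /\ coal_sum a [set: 'I_n] = Kv v /\ in_core a v /\ ~~ is_partition C.

Definition Upsilon v a C : Prop :=
  Omega v a C /\ coal_sum a [set: 'I_n] > Kv v /\ in_core a v.

Definition Psi v a C : Prop :=
  Omega v a C /\ exists S : {set 'I_n}, coal_sum a S < v S.

End Game.

(* Main.v *)
Require Import Defs.
From mathcomp Require Import all_boot all_order all_algebra.
From Stdlib Require Import Classical.
Import Order.TTheory GRing.Theory Num.Theory.
Local Open Scope ring_scope.

Lemma sum_part (R : realFieldType) (n : nat) (a : 'I_n -> R) P :
  is_partition P -> \sum_(S in P) coal_sum a S = coal_sum a [set: 'I_n].
Proof.
move=> /and3P [/eqP cov triv _].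
by rewrite /coal_sum -cov big_trivIset.
Qed.

Lemma Kv_ge (R : realFieldType) (n : nat) (v : {set 'I_n} -> R) P :
  is_partition P -> \sum_(S in P) v S <= Kv v.
Proof.
move=> hP; rewrite /Kv.
have : P \in index_enum {set {set 'I_n}} by rewrite mem_index_enum.
elim: (index_enum _) => [//|y r IH]; rewrite inE big_cons.
case/orP => [/eqP <-|/IH H].
  by rewrite hP le_max lexx.
case: ifP => _ //; by rewrite le_max H orbT.
Qed.

Lemma Kv_le (R : realFieldType) (n : nat) (v : {set 'I_n} -> R) a :
  in_core a v -> Kv v <= coal_sum a [set: 'I_n].
Proof.
move=> hc; rewrite /Kv.
apply: (big_ind (fun x => x <= coal_sum a [set: 'I_n])).
- apply: le_trans (_ : \sum_(S in singleton_partition n) coal_sum a S <= _).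
    by apply: ler_sum => S _; exact: hc.
  rewrite /singleton_partition big_imset /=; last by move=> i j _ _; apply: set1_inj.
  rewrite /coal_sum le_eqVlt; apply/orP; left; apply/eqP.
  rewrite [RHS]big_mkcond /=; apply: eq_bigr => i _; by rewrite big_set1 inE.
- by move=> x y hx hy; rewrite ge_max hx hy.
- by move=> P hP; rewrite -(@sum_part _ _ a _ hP); apply: ler_sum => S _; exact: hc.
Qed.

Theorem proposition7 (R : realFieldType) (n : nat) (v : {set 'I_n} -> R)
  (v0 : v set0 = 0)
  (hPi : exists (x : 'I_n -> R) (rho : {set {set 'I_n}}), Pi v x rho) :
  (* each of the four sets is a subset of Omega(v) *)
  (forall a C, Pi v a C -> Omega v a C) /\
  (forall a C, Gamma v a C -> Omega v a C) /\
  (forall a C, Upsilon v a C -> Omega v a C) /\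
  (forall a C, Psi v a C -> Omega v a C) /\
  (* every element of Omega(v) lies in exactly one of them *)
  (forall a C, Omega v a C ->
     (Pi v a C /\ ~ Gamma v a C /\ ~ Upsilon v a C /\ ~ Psi v a C) \/
     (~ Pi v a C /\ Gamma v a C /\ ~ Upsilon v a C /\ ~ Psi v a C) \/
     (~ Pi v a C /\ ~ Gamma v a C /\ Upsilon v a C /\ ~ Psi v a C) \/
     (~ Pi v a C /\ ~ Gamma v a C /\ ~ Upsilon v a C /\ Psi v a C)).
Proof.
have PiO : forall a C, Pi v a C -> Omega v a C.
  move=> a C [hp [hc he]]; split; last split.
  - move=> S T hS hT hST; move/and3P: hp => [_ /trivIsetP tr _]; exact: tr.
  - by move=> i; move: (hc [set i]); rewrite /coal_sum big_set1.
  - by move=> S hS; rewrite he.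
have PiK : forall a C, Pi v a C -> coal_sum a [set: 'I_n] <= Kv v.
  move=> a C [hp [hc he]]; rewrite -(@sum_part _ _ a _ hp).
  rewrite (eq_bigr v); first exact: Kv_ge.
  by move=> S hS; rewrite he.
split; first exact: PiO.
split; first by move=> a C [].
split; first by move=> a C [].
split; first by move=> a C [].
move=> a C hO.
case: (classic (in_core a v)) => [hc|nc]; last first.
  have [S hS] : exists S, coal_sum a S < v S.
    apply: NNPP => H; apply: nc => S; rewrite leNgt; apply/negP => h.
    by apply: H; exists S.
  right; right; right; split; first by case=> _ [].
  split; first by case=> _ [_ []].
  split; first by case=> _ [].
  by split; [|exists S].
have nPsi : ~ Psi v a C by case=> _ [S]; rewrite ltNge hc.
have hge := Kv_le _ _ _ _ hc.
move: hge; rewrite le_eqVlt => /orP [/eqP hK|hK]; last first.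
  right; right; left; split.
    by move=> /PiK; rewrite leNgt hK.
  split; first by case=> _ [hE _]; move: hK; rewrite hE ltxx.
  by [].
have [hp|hnp] := boolP (is_partition C).
  left; split.
    split=> //; split=> // S hS; apply/eqP; rewrite eq_le hc andbT.
    by case: hO => _ [_]; apply.
  split; first by case=> _ [_ [_]]; rewrite hp.
  split; first by case=> _ []; rewrite hK ltxx.
  by [].
right; left; split; first by case=> hp _; rewrite hp in hnp.
split; first by split.
split; first by case=> _ []; rewrite hK ltxx.
by [].
Qed.
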